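(* Consider Algorithm iR2N (described in the context) and suppose (A1)–(A7) hold. Then there exist an infinite index set $N\subseteq\mathbb{N}$ and, for each $k\in N$, an exact Cauchy step $s_{k,\mathrm{cp}}\in\operatorname{argmin}_s m_{\mathrm{cp}}(s;x_k,\nu_k^{-1})$ such that: (i) $\{\hat s_{k,\mathrm{cp}}\}_{k\in N}\to0$ and $\{s_{k,\mathrm{cp}}\}_{k\in N}\to0$; (ii) $\{s_k\}_{k\in N}\to0$; (iii) there exist $u_k\in\nabla f(x_k)+\partial\psi(s_{k,\mathrm{cp}};x_k)$, $k\in N$, with $\{u_k\}_{k\in N}\to0$.
   Context: Setting. $f:\mathbb{R}^n\to\mathbb{R}$ is continuously differentiable, $h:\mathbb{R}^n\to\mathbb{R}\cup\{+\infty\}$ is proper and lower semicontinuous; the problem is $\min_x f(x)+h(x)$. $\|\cdot\|$ is the Euclidean norm (spectral norm for matrices). For each $x$, approximations $\hat f(x)\in\mathbb{R}$ of $f(x)$ and $\hat\nabla f(x)\in\mathbb{R}^n$ of $\nabla f(x)$ are available. For each $x$, $\psi(\cdot;x):\mathbb{R}^n\to\mathbb{R}\cup\{+\infty\}$ is proper, lsc, satisfies $\psi(0;x)=h(x)$ and $\partial\psi(0;x)\subseteq\partial h(x)$ ($\partial$ = limiting subdifferential), and is uniformly prox-bounded: there is $\lambda>0$ such that for every $x$ and every $0<\lambda'<\lambda$, $w\mapsto\psi(w;x)+\tfrac{1}{2\lambda'}\|w\|^2$ is bounded below. Models: $\varphi_{\mathrm{cp}}(s;x)=\hat f(x)+\hat\nabla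 f(x)^Ts$; $m_{\mathrm{cp}}(s;x,\nu^{-1})=\varphi_{\mathrm{cp}}(s;x)+\tfrac12\nu^{-1}\|s\|^2+\psi(s;x)$; for a symmetric $B(x)\in\mathbb{R}^{n\times n}$, $\varphi(s;x)=\hat f(x)+\hat\nabla f(x)^Ts+\tfrac12 s^TB(x)s$ and $m(s;x,\sigma)=\varphi(s;x)+\tfrac12\sigma\|s\|^2+\psi(s;x)$. Algorithm iR2N. Constants: $\kappa_f,\kappa_\nabla>0$, $0<\gamma_3\le 1<\gamma_1\le\gamma_2$, $0<\hat\eta_1\le\hat\eta_2<1$, $0<\theta_1<1<\theta_2$, $\sigma_{\min}>4\kappa_f\theta_1\theta_2^2/(\hat\eta_1(1-\theta_1))$, $\sigma_0\ge\sigma_{\min}$, $x_0\in\mathbb{R}^n$. At iteration $k=0,1,\dots$: choose symmetric $B_k=B(x_k)$; set $\nu_k=\theta_1/(\|B_k\|+\sigma_k)$; compute $\hat s_{k,\mathrm{cp}}$ with $m_{\mathrm{cp}}(\hat s_{k,\mathrm{cp}};x_k,\nu_k^{-1})\le m_{\mathrm{cp}}(0;x_k,\nu_k^{-1})$ (an approximate minimizer of $m_{\mathrm{cp}}(\cdot;x_k,\nu_k^{-1})$ obtained by a descent procedure from $s=0$) and set $\hat\xi_{k,\mathrm{cp}}=(\varphi_{\mathrm{cp}}+\psi)(0;x_k)-(\varphi_{\mathrm{cp}}+\psi)(\hat s_{k,\mathrm{cp}};x_k)$; compute $s_k$ with $m(s_k;x_k,\sigma_k)\le m(\hat s_{k,\mathrm{cp}};x_k,\sigma_k)$;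 if $\|s_k\|>\theta_2\|\hat s_{k,\mathrm{cp}}\|$, reset $s_k=\hat s_{k,\mathrm{cp}}$ (these computations are repeated with refined $\hat f,\hat\nabla f$ until (A6) holds). Compute $$\hat\rho_k=\frac{\hat f(x_k)+h(x_k)-\hat f(x_k+s_k)-h(x_k+s_k)}{\varphi(0;x_k)+\psi(0;x_k)-\varphi(s_k;x_k)-\psi(s_k;x_k)},$$ where $\varphi(\cdot;x_k)$ uses $B_k$. If $\hat\rho_k\ge\hat\eta_1$ set $x_{k+1}=x_k+s_k$, else $x_{k+1}=x_k$. Choose $\sigma_{k+1}\in[\gamma_3\sigma_k,\sigma_k]$ if $\hat\rho_k\ge\hat\eta_2$, $\sigma_{k+1}\in[\sigma_k,\gamma_1\sigma_k]$ if $\hat\eta_1\le\hat\rho_k<\hat\eta_2$, $\sigma_{k+1}\in[\gamma_1\sigma_k,\gamma_2\sigma_k]$ if $\hat\rho_k<\hat\eta_1$; then reset $\sigma_{k+1}=\max(\sigma_{k+1},\sigma_{\min})$. Assumptions. (A1) $|f(x+s)-f(x)-\nabla f(x)^Ts|\le\tfrac12L\|s\|^2$ for all $x,s$, for some $L\ge0$. (A2) $\|B_k\|\le\kappa_B$ for all $k$, for some $\kappa_B>0$. (A3) $|\psi(s;x)-h(x+s)|\le\kappa_h\|s\|^2$ for all $x,s$, for some $\kappa_h>0$. (A4) For all $k$, $\varphi(0;x_k)+\psi(0;x_k)-(\varphi(s_k;x_k)+\psi(s_k;x_k))\ge(1-\theta_1)\hat\xi_{k,\mathrm{cp}}$. (A5)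 There is $\kappa_s\in(0,1]$ such that for all $k$ the set $\operatorname{argmin}_s m_{\mathrm{cp}}(s;x_k,\nu_k^{-1})$ is nonempty and $\|\hat s_{k,\mathrm{cp}}\|\ge\kappa_s\min\{\|s\|\mid s\in\operatorname{argmin}_{s'} m_{\mathrm{cp}}(s';x_k,\nu_k^{-1})\}$. (A6) For all $k$: $|f(x_k)-\hat f(x_k)|\le\kappa_f\|s_k\|^2$, $|f(x_k+s_k)-\hat f(x_k+s_k)|\le\kappa_f\|s_k\|^2$, $\|\nabla f(x_k)-\hat\nabla f(x_k)\|\le\kappa_\nabla\|s_k\|$. (A7) There is $(f+h)_{\mathrm{low}}\in\mathbb{R}$ with $(f+h)(x)\ge(f+h)_{\mathrm{low}}$ for all $x$. *)

(* Defs.v *)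
From HB Require Import structures.
From mathcomp Require Import all_boot all_order all_algebra.
From mathcomp Require Import boolp classical_sets cardinality reals constructive_ereal.
Set Implicit Arguments. Unset Strict Implicit. Unset Printing Implicit Defensive.
Import Order.TTheory GRing.Theory Num.Theory.
Local Open Scope ring_scope.
Local Open Scope classical_set_scope.

Section Defs.
Variables (R : realType) (n : nat).
Local Notation vec := 'cV[R]_n.

Definition dotp (u v : vec) : R := \sum_i u i 0 * v i 0.
Definition enorm (u : vec) : R := Num.sqrt (\sum_i (u i 0) ^+ 2).

Definition opnorm (B : 'M[R]_n) : R :=
  sup [set enorm (B *m s) | s in [set s : vec | enorm s <= 1]].

Definition has_gradient (f : vec -> R) (g : vec -> vec) : Prop :=
  forall x eps, 0 < eps -> exists2 d, 0 < d & forall y, enorm (y - x) < d ->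
    `|f y - f x - dotp (g x) (y - x)| <= eps * enorm (y - x).
Definition vcontinuous (g : vec -> vec) : Prop :=
  forall x eps, 0 < eps -> exists2 d, 0 < d & forall y, enorm (y - x) < d ->
    enorm (g y - g x) < eps.
Definition C1_gradient (f : vec -> R) (g : vec -> vec) : Prop :=
  has_gradient f g /\ vcontinuous g.

Definition proper_fun (h : vec -> \bar R) : Prop :=
  (forall x, h x != -oo%E) /\ exists x, (h x < +oo)%E.
Definition lsc_fun (h : vec -> \bar R) : Prop :=
  forall x (a : R), (a%:E < h x)%E -> exists2 d, 0 < d &
    forall y, enorm (y - x) < d -> (a%:E < h y)%E.

Definition vseq_cvg (u : nat -> vec) (l : vec) : Prop :=
  forall eps, 0 < eps -> exists K, forall j, (K <= j)%N -> enorm (u j - l) < eps.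
Definition rseq_cvg (u : nat -> R) (l : R) : Prop :=
  forall eps, 0 < eps -> exists K, forall j, (K <= j)%N -> `|u j - l| < eps.
Definition cvg0_along (N : set nat) (u : nat -> vec) : Prop :=
  forall eps, 0 < eps -> exists K, forall k, N k -> (K <= k)%N -> enorm (u k) < eps.

Definition frechet_subdiff (h : vec -> \bar R) (x v : vec) : Prop :=
  h x \is a fin_num /\
  forall eps, 0 < eps -> exists2 d, 0 < d & forall y, enorm (y - x) < d ->
    ((fine (h x) + dotp v (y - x) - eps * enorm (y - x))%:E <= h y)%E.
Definition limiting_subdiff (h : vec -> \bar R) (x v : vec) : Prop :=
  h x \is a fin_num /\
  exists xs vs : nat -> vec,
    (forall j, frechet_subdiff h (xs j) (vs j)) /\ vseq_cvg xs x /\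
    rseq_cvg (fun j => fine (h (xs j))) (fine (h x)) /\ vseq_cvg vs v.

Definition argmin (F : vec -> \bar R) : set vec :=
  [set s | forall t, (F s <= F t)%E].

(* models; psi s x stands for psi(s; x) *)
Definition phi_cp (fh : R) (gh : vec) (s : vec) : R := fh + dotp gh s.
Definition m_cp (psi : vec -> vec -> \bar R) (x : vec) (fh : R) (gh : vec)
  (nuinv : R) (s : vec) : \bar R :=
  ((phi_cp fh gh s + nuinv / 2 * enorm s ^+ 2)%:E + psi s x)%E.
Definition phi_q (fh : R) (gh : vec) (B : 'M[R]_n) (s : vec) : R :=
  fh + dotp gh s + dotp s (B *m s) / 2.
Definition m_q (psi : vec -> vec -> \bar R) (x : vec) (fh : R) (gh : vec)
  (B : 'M[R]_n) (sigma : R) (s : vec) : \bar R :=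
  ((phi_q fh gh B s + sigma / 2 * enorm s ^+ 2)%:E + psi s x)%E.

Definition xi_cp (psi : vec -> vec -> \bar R) (x : vec) (fh : R) (gh : vec)
  (shat : vec) : \bar R :=
  (((phi_cp fh gh (0%R : vec))%:E + psi (0%R : vec) x) - ((phi_cp fh gh shat)%:E + psi shat x))%E.
Definition model_decrease (psi : vec -> vec -> \bar R) (x : vec) (fh : R)
  (gh : vec) (B : 'M[R]_n) (s : vec) : \bar R :=
  (((phi_q fh gh B (0%R : vec))%:E + psi (0%R : vec) x) - ((phi_q fh gh B s)%:E + psi s x))%E.
Definition rho_hat (h : vec -> \bar R) (psi : vec -> vec -> \bar R) (x : vec)
  (fh0 fh1 : R) (gh : vec) (B : 'M[R]_n) (s : vec) : R :=
  fine (((fh0%:E + h x) - (fh1%:E + h (x + s)%R))%E) /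
  fine (model_decrease psi x fh0 gh B s).

(* one run of Algorithm iR2N: iterates x_k, regularization sigma_k, the inexact
   values fh0 k = fhat(x_k), fh1 k = fhat(x_k + s_k), gh k = grad-hat f(x_k)
   (final values after refinement), the approximate Cauchy step shat k and
   the step s k. *)
Definition iR2N_run (h : vec -> \bar R) (psi : vec -> vec -> \bar R)
  (Bfun : vec -> 'M[R]_n) (gam3 gam1 gam2 eta1 eta2 th1 th2 smin : R)
  (x : nat -> vec) (sigma : nat -> R) (fh0 fh1 : nat -> R) (gh : nat -> vec)
  (shat s : nat -> vec) : Prop :=
  smin <= sigma 0%N /\
  forall k : nat,
    let Bk := Bfun (x k) in
    let nuk := th1 / (opnorm Bk + sigma k) in
    let rhok := rho_hat h psi (x k) (fh0 k) (fh1 k) (gh k) Bk (s k) in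
    (m_cp psi (x k) (fh0 k) (gh k) nuk^-1 (shat k)
       <= m_cp psi (x k) (fh0 k) (gh k) nuk^-1 (0%R : vec))%E /\
    (exists s' : vec,
       (m_q psi (x k) (fh0 k) (gh k) Bk (sigma k) s'
          <= m_q psi (x k) (fh0 k) (gh k) Bk (sigma k) (shat k))%E /\
       s k = if th2 * enorm (shat k) < enorm s' then shat k else s') /\
    x k.+1 = (if eta1 <= rhok then x k + s k else x k) /\
    exists sig' : R,
      (eta2 <= rhok -> gam3 * sigma k <= sig' <= sigma k) /\
      (eta1 <= rhok < eta2 -> sigma k <= sig' <= gam1 * sigma k) /\
      (rhok < eta1 -> gam1 * sigma k <= sig' <= gam2 * sigma k) /\
      sigma k.+1 = Num.max sig' smin.

End Defs.

(* Main.v *)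
Require Import Defs.
From HB Require Import structures.
From mathcomp Require Import all_boot all_order all_algebra.
From mathcomp Require Import boolp classical_sets cardinality reals constructive_ereal.
From mathcomp Require Import ring lra.
Import Order.TTheory GRing.Theory Num.Theory.
Local Open Scope ring_scope.
Local Open Scope classical_set_scope.

Section Vec.
Variables (R : realType) (n : nat).
Local Notation vec := 'cV[R]_n.
Implicit Types u v w t : vec.
Implicit Types B : 'M[R]_n.

Lemma dotpC u v : dotp u v = dotp v u.
Proof. by apply: eq_bigr => i _; rewrite mulrC. Qed.
Lemma dotpDl u v w : dotp (u + v) w = dotp u w + dotp v w.
Proof. by rewrite /dotp -big_split; apply: eq_bigr => i _; rewrite !mxE mulrDl. Qed.
Lemma dotpZl a u v : dotp (a *: u) v = a * dotp u v.
Proof. by rewrite /dotp mulr_sumr; apply: eq_bigr => i _; rewrite !mxE mulrA. Qed.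
Lemma dotpNl u v : dotp (- u) v = - dotp u v.
Proof. by rewrite -scaleN1r dotpZl mulN1r. Qed.
Lemma dotpBl u v w : dotp (u - v) w = dotp u w - dotp v w.
Proof. by rewrite dotpDl dotpNl. Qed.
Lemma dotpDr u v w : dotp w (u + v) = dotp w u + dotp w v.
Proof. by rewrite dotpC dotpDl !(dotpC w). Qed.
Lemma dotpZr a u v : dotp v (a *: u) = a * dotp v u.
Proof. by rewrite dotpC dotpZl dotpC. Qed.
Lemma dotpNr u v : dotp v (- u) = - dotp v u.
Proof. by rewrite dotpC dotpNl dotpC. Qed.
Lemma dotpBr u v w : dotp w (u - v) = dotp w u - dotp w v.
Proof. by rewrite dotpDr dotpNr. Qed.
Lemma dotp0l v : dotp 0 v = 0.
Proof. by rewrite /dotp big1 // => i _; rewrite mxE mul0r. Qed.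
Lemma dotp0r v : dotp v 0 = 0.
Proof. by rewrite dotpC dotp0l. Qed.
Lemma dotpp_ge0 u : 0 <= dotp u u.
Proof. by rewrite /dotp sumr_ge0 // => i _; rewrite -expr2 sqr_ge0. Qed.
Lemma enormE u : enorm u ^+ 2 = dotp u u.
Proof.
rewrite /enorm sqr_sqrtr; last by rewrite sumr_ge0 // => i _; rewrite sqr_ge0.
by apply: eq_bigr => i _; rewrite expr2.
Qed.
Lemma enorm_ge0 u : 0 <= enorm u.
Proof. exact: sqrtr_ge0. Qed.
Lemma dotpp_eq0 u : dotp u u = 0 -> u = 0.
Proof.
move=> H; apply/matrixP => i j; rewrite (ord1 j) mxE.
have := @psumr_eq0P _ _ xpredT (fun i => u i 0 * u i 0) (fun i _ => ltac:(by rewrite /= -expr2 sqr_ge0)) H i isT.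
by move/eqP; rewrite mulf_eq0 orbb => /eqP.
Qed.
Lemma enorm_eq0 u : enorm u = 0 -> u = 0.
Proof. by move=> H; apply: dotpp_eq0; rewrite -enormE H expr0n. Qed.
Lemma enorm0 : enorm (0 : vec) = 0.
Proof. by rewrite /enorm big1 ?sqrtr0 // => i _; rewrite mxE expr0n. Qed.

Lemma cs2 u v : dotp u v ^+ 2 <= dotp u u * dotp v v.
Proof.
have [uu0|uu0] := eqVneq (dotp u u) 0.
  by rewrite (dotpp_eq0 _ uu0) !dotp0l expr0n mul0r.
have uup : 0 < dotp u u by rewrite lt0r uu0 dotpp_ge0.
set t := dotp u v / dotp u u.
have := dotpp_ge0 (t *: u - v).
rewrite dotpBl !dotpBr !dotpZl !dotpZr (dotpC v u).
rewrite /t => H.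
set a := dotp u u in H uup *; set b := dotp u v in H t *; set c := dotp v v in H *.
have E : b / a * (b / a * a) - b / a * b - (b / a * b - c) = (a * c - b ^+ 2) / a.
  by field; rewrite gt_eqF.
by move: H; rewrite E ler_pdivlMr // mul0r subr_ge0.
Qed.

Lemma cs u v : `|dotp u v| <= enorm u * enorm v.
Proof.
rewrite -(@ler_pXn2r _ 2) ?nnegrE ?mulr_ge0 ?enorm_ge0 //.
by rewrite exprMn !enormE real_normK ?num_real // cs2.
Qed.

Lemma sq_eq x y : 0 <= x -> 0 <= y -> x ^+ 2 = y ^+ 2 -> x = y :> R.
Proof. by move=> hx hy /eqP; rewrite eqrXn2 // => /eqP. Qed.
Lemma sq_le x y : 0 <= x -> 0 <= y -> x ^+ 2 <= y ^+ 2 -> x <= y :> R.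
Proof. by move=> hx hy; rewrite ler_pXn2r. Qed.

Lemma enormZ a u : enorm (a *: u) = `|a| * enorm u.
Proof.
apply: sq_eq; rewrite ?mulr_ge0 ?enorm_ge0 //.
by rewrite exprMn !enormE dotpZl dotpZr mulrA -expr2 real_normK ?num_real.
Qed.
Lemma enormN u : enorm (- u) = enorm u.
Proof. by rewrite -scaleN1r enormZ normrN1 mul1r. Qed.
Lemma enormD u v : enorm (u + v) <= enorm u + enorm v.
Proof.
apply: sq_le; rewrite ?addr_ge0 ?enorm_ge0 //.
rewrite enormE dotpDl !dotpDr sqrrD !enormE (dotpC v u).
have := cs u v; have := ler_norm (dotp u v); lra.
Qed.
Lemma enormB u v : enorm (u - v) <= enorm u + enorm v.
Proof. by rewrite -(enormN v) enormD. Qed.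
Lemma enorm_sub u v : enorm (u - v) = enorm (v - u).
Proof. by rewrite -enormN opprB. Qed.

Definition rowv (B : 'M[R]_n) i : vec := \col_j B i j.
Lemma mulmxE (B : 'M[R]_n) t i : (B *m t) i 0 = dotp (rowv B i) t.
Proof. by rewrite mxE; apply: eq_bigr => j _; rewrite mxE. Qed.

Definition opset (B : 'M[R]_n) :=
  [set enorm (B *m s) | s in [set s : vec | enorm s <= 1]].
Lemma opset_sup B : has_sup (opset B).
Proof.
split; first by exists (enorm (B *m 0)), 0 => //=; rewrite enorm0 ler01.
exists (Num.sqrt (\sum_i dotp (rowv B i) (rowv B i))) => _ [t /= ht <-].
apply: sq_le; [exact: enorm_ge0|exact: sqrtr_ge0|].
rewrite [X in _ <= X]sqr_sqrtr; last by rewrite sumr_ge0 // => i _; exact: dotpp_ge0.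
rewrite enormE /dotp; apply: ler_sum => i _.
rewrite mulmxE -expr2; apply: (le_trans (cs2 _ _)).
rewrite ler_piMr ?dotpp_ge0 // -enormE.
have := enorm_ge0 t; nra.
Qed.
Lemma opnorm_ge0 B : 0 <= opnorm B.
Proof.
apply: (le_trans _ (sup_upper_bound (opset_sup B) _)); last first.
  by exists 0; rewrite //= enorm0 ler01.
by rewrite mulmx0 enorm0.
Qed.
Lemma opnormP B t : enorm (B *m t) <= opnorm B * enorm t.
Proof.
have [t0|tn0] := eqVneq (enorm t) 0.
  by rewrite (enorm_eq0 _ t0) mulmx0 enorm0 mulr0.
have tp : 0 < enorm t by rewrite lt0r tn0 enorm_ge0.
set t' := (enorm t)^-1 *: t.
have ht' : enorm t' = 1 by rewrite /t' enormZ ger0_norm ?invr_ge0 ?enorm_ge0 // mulVf.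
have H := sup_upper_bound (opset_sup B) (ex_intro2 _ _ t' (_ : enorm t' <= 1) erefl).
move: H => /(_ ltac:(by rewrite ht'));
rewrite /t' -scalemxAr enormZ ger0_norm ?invr_ge0 ?enorm_ge0 //.
by rewrite mulrC -ler_pdivlMr ?invr_gt0 // invrK.
Qed.
Lemma quadB B t : `|dotp t (B *m t)| <= opnorm B * enorm t ^+ 2.
Proof.
apply: (le_trans (cs _ _)); rewrite mulrC expr2 mulrA ler_wpM2r ?enorm_ge0 //.
exact: opnormP.
Qed.
End Vec.
Arguments dotpC {R n}.
Arguments dotpDl {R n}.
Arguments dotpZl {R n}.
Arguments dotpNl {R n}.
Arguments dotpBl {R n}.
Arguments dotpDr {R n}.
Arguments dotpZr {R n}.
Arguments dotpNr {R n}.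
Arguments dotpBr {R n}.
Arguments dotp0l {R n}.
Arguments dotp0r {R n}.
Arguments dotpp_ge0 {R n}.
Arguments enormE {R n}.
Arguments enorm_ge0 {R n}.
Arguments dotpp_eq0 {R n}.
Arguments enorm_eq0 {R n}.
Arguments cs2 {R n}.
Arguments cs {R n}.
Arguments enormZ {R n}.
Arguments enormN {R n}.
Arguments enormD {R n}.
Arguments enormB {R n}.
Arguments enorm_sub {R n}.
Arguments mulmxE {R n}.
Arguments opset_sup {R n}.
Arguments opnorm_ge0 {R n}.
Arguments opnormP {R n}.
Arguments quadB {R n}.
Arguments enorm0 {R n}. Arguments sq_eq {R}. Arguments sq_le {R}.

Lemma fin_le {R : realType} (y z : \bar R) r : (r%:E + y <= z)%E -> z \is a fin_num ->
  y != -oo%E -> y \is a fin_num.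
Proof.
by case: z => // z; case: y => // y.
Qed.

Lemma fin_le2 {R : realType} (y z : \bar R) : (y <= z)%E -> z \is a fin_num ->
  y != -oo%E -> y \is a fin_num.
Proof. by case: z => // z; case: y => // y. Qed.

Lemma core3 {R : realType} (MD num ns2 nsh2 m C t2 eta2 : R) : 0 < nsh2 -> ns2 <= t2 * nsh2 ->
  m * nsh2 <= MD -> MD - C * ns2 <= num -> 0 <= C -> C * t2 <= (1 - eta2) * m ->
  0 < m -> eta2 < 1 -> eta2 <= num / MD.
Proof.
move=> h1 h2 h3 h4 h5 h6 h7 h8.
have MDp : 0 < MD by apply: lt_le_trans h3; rewrite mulr_gt0.
rewrite ler_pdivlMr //.
have e1 : C * ns2 <= C * (t2 * nsh2) by rewrite ler_wpM2l.
have e2 : C * t2 * nsh2 <= (1 - eta2) * m * nsh2 by rewrite ler_wpM2r // ltW.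
have e3 : (1 - eta2) * (m * nsh2) <= (1 - eta2) * MD by rewrite ler_wpM2l // subr_ge0 ltW.
rewrite !mulrA in e1 e3; lra.
Qed.

Lemma archi {R : realType} (r : R) : exists j : nat, r < j%:R.
Proof.
have h0 : 0 <= Num.max r 0 by rewrite le_max lexx orbT.
exists (Num.bound (Num.max r 0)); apply: le_lt_trans (archi_boundP h0).
by rewrite le_max lexx.
Qed.
Lemma bern {R : realType} (q : R) j : 1 < q -> 1 + j%:R * (q - 1) <= q ^+ j.
Proof.
move=> hq; elim: j => [|j IH]; first by rewrite mul0r addr0 expr0.
rewrite exprS.
have h1 : q * (1 + j%:R * (q - 1)) <= q * q ^+ j by rewrite ler_pM2l // (lt_trans ltr01 hq).
have h2 : 0 <= j%:R * ((q - 1) * (q - 1)) :> R by rewrite mulr_ge0 // mulr_ge0 // subr_ge0 ltW.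
apply: le_trans h1; rewrite -natr1.
have -> : q * (1 + j%:R * (q - 1)) = 1 + (j%:R + 1) * (q - 1) + j%:R * ((q - 1) * (q - 1)) by ring.
by rewrite lerDl.
Qed.
Lemma geo_unbounded {R : realType} (q r : R) : 1 < q -> exists j : nat, r < q ^+ j.
Proof.
move=> hq; have [j hj] := archi (r / (q - 1)).
exists j; apply: (lt_le_trans _ (bern q j hq)).
have : r < j%:R * (q - 1) by rewrite -ltr_pdivrMr // subr_gt0.
have : 0 <= 1 :> R := ler01.
lra.
Qed.
Lemma infinite_of (N : set nat) : (forall K, exists k, (K <= k)%N /\ N k) -> infinite_set N.
Proof.
move=> H /finite_seqP [l El].
have [k [hk Nk]] := H (\max_(i <- l) i).+1.
have : k \in l by move: Nk; rewrite El.
move=> /(@leq_bigmax_seq _ l xpredT (fun i => i)) /(_ isT).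
by move: hk; rewrite ltnNge => /negP.
Qed.

Section Main.
Variables (R : realType) (n : nat)
  (f : 'cV[R]_n -> R) (g : 'cV[R]_n -> 'cV[R]_n)
  (h : 'cV[R]_n -> \bar R) (psi : 'cV[R]_n -> 'cV[R]_n -> \bar R)
  (Bfun : 'cV[R]_n -> 'M[R]_n)
  (kf kg gam3 gam1 gam2 eta1 eta2 th1 th2 smin : R)
  (x : nat -> 'cV[R]_n) (sigma : nat -> R) (fh0 fh1 : nat -> R)
  (gh : nat -> 'cV[R]_n) (shat s : nat -> 'cV[R]_n)
  (L kB kh ks low : R).
Local Notation vec := 'cV[R]_n.
Hypothesis Hh_noo : forall y, h y != -oo%E.
Hypothesis Hpsi_noo : forall y w, psi w y != -oo%E.
Hypothesis Hpsi0 : forall y, psi 0 y = h y.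
Hypothesis Hkf : 0 < kf.
Hypothesis Hkg : 0 < kg.
Hypothesis Hgam3 : 0 < gam3 <= 1.
Hypothesis Hgam1 : 1 < gam1 <= gam2.
Hypothesis Heta1 : 0 < eta1 <= eta2.
Hypothesis Heta2 : eta2 < 1.
Hypothesis Hth1 : 0 < th1 < 1.
Hypothesis Hth2 : 1 < th2.
Hypothesis Hsmin : 4 * kf * th1 * th2 ^+ 2 / (eta1 * (1 - th1)) < smin.
Hypothesis Hx0 : h (x 0%N) \is a fin_num.
Hypothesis Hrun : iR2N_run h psi Bfun gam3 gam1 gam2 eta1 eta2 th1 th2 smin x sigma fh0 fh1 gh shat s.
Hypothesis HL0 : 0 <= L.
Hypothesis HL : forall y t, `|f (y + t) - f y - dotp (g y) t| <= L / 2 * enorm t ^+ 2.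
Hypothesis HkB0 : 0 < kB.
Hypothesis HkB : forall k, opnorm (Bfun (x k)) <= kB.
Hypothesis Hkh0 : 0 < kh.
Hypothesis Hkh : forall y t,
     (psi t y <= h (y + t)%R + (kh * enorm t ^+ 2)%:E)%E /\
     (h (y + t)%R <= psi t y + (kh * enorm t ^+ 2)%:E)%E.
Hypothesis HA4 : forall k, ((1 - th1)%:E * xi_cp psi (x k) (fh0 k) (gh k) (shat k)
      <= model_decrease psi (x k) (fh0 k) (gh k) (Bfun (x k)) (s k))%E.
Hypothesis Hks : 0 < ks <= 1.
Hypothesis HA5 : forall k,
     let nuk := th1 / (opnorm (Bfun (x k)) + sigma k) in
     let A := argmin (m_cp psi (x k) (fh0 k) (gh k) nuk^-1) in
     A !=set0 /\ ks * inf [set enorm t | t in A] <= enorm (shat k).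
Hypothesis HA6 : forall k,
     `|f (x k) - fh0 k| <= kf * enorm (s k) ^+ 2 /\
     `|f (x k + s k) - fh1 k| <= kf * enorm (s k) ^+ 2 /\
     enorm (g (x k) - gh k) <= kg * enorm (s k).
Hypothesis Hlow : forall y, (low%:E <= (f y)%:E + h y)%E.

Definition a k := (th1 / (opnorm (Bfun (x k)) + sigma k))^-1.
Definition rho k := rho_hat h psi (x k) (fh0 k) (fh1 k) (gh k) (Bfun (x k)) (s k).

Lemma step_cp k : (m_cp psi (x k) (fh0 k) (gh k) (a k) (shat k)
       <= m_cp psi (x k) (fh0 k) (gh k) (a k) 0)%E.
Proof. by case: Hrun => _ /(_ k) /= []. Qed.
Lemma step_s k : exists s' : vec,
       (m_q psi (x k) (fh0 k) (gh k) (Bfun (x k)) (sigma k) s'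
          <= m_q psi (x k) (fh0 k) (gh k) (Bfun (x k)) (sigma k) (shat k))%E /\
       s k = if th2 * enorm (shat k) < enorm s' then shat k else s'.
Proof. by case: Hrun => _ /(_ k) /= [_ []]. Qed.
Lemma step_x k : x k.+1 = (if eta1 <= rho k then x k + s k else x k).
Proof. by case: Hrun => _ /(_ k) /= [_ [_ []]]. Qed.
Lemma step_sig k : exists sig' : R,
      (eta2 <= rho k -> gam3 * sigma k <= sig' <= sigma k) /\
      (eta1 <= rho k < eta2 -> sigma k <= sig' <= gam1 * sigma k) /\
      (rho k < eta1 -> gam1 * sigma k <= sig' <= gam2 * sigma k) /\
      sigma k.+1 = Num.max sig' smin.
Proof. by case: Hrun => _ /(_ k) /= [_ [_ []]]. Qed.

Lemma smin_gt0 : 0 < smin.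
Proof.
apply: le_lt_trans Hsmin; have := Hth1; have := Heta1; have := Hkf => ? /andP[? ?] /andP[? ?].
apply: divr_ge0; last by apply: mulr_ge0; lra.
by apply: mulr_ge0; [apply: mulr_ge0; [apply: mulr_ge0; lra|lra]|exact: sqr_ge0].
Qed.
Lemma sigma_ge k : smin <= sigma k.
Proof.
case: k => [|k]; first by case: Hrun.
by have [sig' [_ [_ [_ ->]]]] := step_sig k; rewrite le_max lexx orbT.
Qed.
Lemma aE k : a k = (opnorm (Bfun (x k)) + sigma k) / th1.
Proof. by rewrite /a invf_div. Qed.
Lemma a_ge k : sigma k / th1 <= a k.
Proof.
case/andP: Hth1 => t0 _.
by rewrite aE ler_pM2r ?invr_gt0 // lerDr opnorm_ge0.
Qed.
Lemma a_gt0 k : 0 < a k.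
Proof.
case/andP: Hth1 => t0 _.
by apply: lt_le_trans (a_ge k); rewrite divr_gt0 // (lt_le_trans smin_gt0 (sigma_ge k)).
Qed.

Lemma fin_step k : h (x k) \is a fin_num ->
  [/\ psi (shat k) (x k) \is a fin_num, psi (s k) (x k) \is a fin_num &
      h (x k + s k) \is a fin_num].
Proof.
move=> hk.
have m0 : m_cp psi (x k) (fh0 k) (gh k) (a k) 0 \is a fin_num.
  by rewrite /m_cp Hpsi0 fin_numD hk andbT.
have hsh : psi (shat k) (x k) \is a fin_num.
  by move: (step_cp k); rewrite {1}/m_cp => /fin_le; apply.
have hs : psi (s k) (x k) \is a fin_num.
  have [s' [Hq ->]] := step_s k; case: ifP => // _.
  have mq : m_q psi (x k) (fh0 k) (gh k) (Bfun (x k)) (sigma k) (shat k) \is a fin_num.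
    by rewrite /m_q fin_numD hsh andbT.
  by move: Hq; rewrite {1}/m_q => /fin_le; apply.
split => //.
have [_ H2] := Hkh (x k) (s k).
move: H2 => /fin_le2 -> //.
by rewrite fin_numD hs.
Qed.

Lemma fin_x k : h (x k) \is a fin_num.
Proof.
elim: k => [|k IH]; first exact: Hx0.
by rewrite step_x; case: ifP => // _; case: (fin_step k IH).
Qed.

Definition Hx k := fine (h (x k)).
Definition Hs k := fine (h (x k + s k)).
Definition Ps k := fine (psi (s k) (x k)).
Definition Psh k := fine (psi (shat k) (x k)).
Lemma EHx k : h (x k) = (Hx k)%:E.
Proof. by rewrite /Hx fineK // fin_x. Qed.
Lemma EHs k : h (x k + s k) = (Hs k)%:E.
Proof. by rewrite /Hs fineK //; case: (fin_step k (fin_x k)). Qed.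
Lemma EPs k : psi (s k) (x k) = (Ps k)%:E.
Proof. by rewrite /Ps fineK //; case: (fin_step k (fin_x k)). Qed.
Lemma EPsh k : psi (shat k) (x k) = (Psh k)%:E.
Proof. by rewrite /Psh fineK //; case: (fin_step k (fin_x k)). Qed.

Lemma R1 k : dotp (gh k) (shat k) + a k / 2 * enorm (shat k) ^+ 2 + Psh k <= Hx k.
Proof.
have := step_cp k; rewrite /m_cp /phi_cp Hpsi0 EHx EPsh -!EFinD lee_fin.
rewrite dotp0r enorm0 expr0n /= mulr0 !addr0.
by move=> H; have := H; lra.
Qed.
Lemma R2 k : (1 - th1) * (Hx k - dotp (gh k) (shat k) - Psh k) <=
   Hx k - dotp (gh k) (s k) - dotp (s k) (Bfun (x k) *m s k) / 2 - Ps k.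
Proof.
have := HA4 k; rewrite /xi_cp /model_decrease /phi_cp /phi_q Hpsi0 EHx EPsh EPs.
rewrite -!EFinD -EFinM lee_fin.
rewrite mulmx0 !dotp0r mul0r !addr0.
by move=> H; have := H; lra.
Qed.
Lemma R3 k : Ps k <= Hs k + kh * enorm (s k) ^+ 2 /\ Hs k <= Ps k + kh * enorm (s k) ^+ 2.
Proof.
have [H1 H2] := Hkh (x k) (s k).
by move: H1 H2; rewrite EHs EPs -!EFinD !lee_fin.
Qed.
Lemma R4 k : rho k = (fh0 k + Hx k - (fh1 k + Hs k)) /
   (Hx k - dotp (gh k) (s k) - dotp (s k) (Bfun (x k) *m s k) / 2 - Ps k).
Proof.
rewrite /rho /rho_hat /model_decrease /phi_q EHx EHs Hpsi0 EHx EPs.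
rewrite -!EFinD /= mulmx0 !dotp0r mul0r !addr0.
congr (_ / _); lra.
Qed.

Lemma C0 k : enorm (s k) <= th2 * enorm (shat k).
Proof.
have := Hth2 => t2.
have [s' [_ ->]] := step_s k; case: ltP => // _.
by rewrite ler_peMl ?enorm_ge0 // ltW.
Qed.
Definition MD k := Hx k - dotp (gh k) (s k) - dotp (s k) (Bfun (x k) *m s k) / 2 - Ps k.
Definition num k := fh0 k + Hx k - (fh1 k + Hs k).
Lemma C1 k : (1 - th1) / 2 * (sigma k / th1) * enorm (shat k) ^+ 2 <= MD k.
Proof.
have := Hth1 => /andP[t0 t1].
have h1 := R1 k; have h2 := R2 k.
have e : (1 - th1) * (a k / 2 * enorm (shat k) ^+ 2) <=
         (1 - th1) * (Hx k - dotp (gh k) (shat k) - Psh k).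
  by rewrite ler_pM2l ?subr_gt0 //; lra.
have e2 : sigma k / th1 * enorm (shat k) ^+ 2 <= a k * enorm (shat k) ^+ 2.
  by rewrite ler_wpM2r ?sqr_ge0 ?a_ge.
have e3 : (1 - th1) / 2 * (sigma k / th1 * enorm (shat k) ^+ 2) <=
          (1 - th1) / 2 * (a k * enorm (shat k) ^+ 2).
  by apply: ler_wpM2l => //; apply: divr_ge0; lra.
have i1 : (1 - th1) / 2 * (sigma k / th1) * enorm (shat k) ^+ 2 =
          (1 - th1) / 2 * (sigma k / th1 * enorm (shat k) ^+ 2) by ring.
have i2 : (1 - th1) * (a k / 2 * enorm (shat k) ^+ 2) =
          (1 - th1) / 2 * (a k * enorm (shat k) ^+ 2) by ring.
rewrite /MD; lra.
Qed.

Lemma nsq k : enorm (s k) ^+ 2 <= th2 ^+ 2 * enorm (shat k) ^+ 2.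
Proof.
rewrite -exprMn ler_pXn2r ?nnegrE ?enorm_ge0 ?C0 //.
by rewrite mulr_ge0 ?enorm_ge0 // ltW // (lt_trans ltr01 Hth2).
Qed.
Lemma err k : MD k - (2 * kf + L / 2 + kg + kB / 2 + kh) * enorm (s k) ^+ 2 <= num k.
Proof.
have [E1 [E2 E3]] := HA6 k.
have A := HL (x k) (s k).
have B : `|dotp (g (x k)) (s k) - dotp (gh k) (s k)| <= kg * enorm (s k) ^+ 2.
  rewrite -dotpBl; apply: (le_trans (cs _ _)).
  by rewrite expr2 mulrA ler_wpM2r ?enorm_ge0.
have Cb : `|dotp (s k) (Bfun (x k) *m s k)| <= kB * enorm (s k) ^+ 2.
  by apply: (le_trans (quadB _ _)); rewrite ler_wpM2r ?sqr_ge0.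
have [_ D] := R3 k.
move: E1 E2 A B Cb => /ler_normlP[E1 E1'] /ler_normlP[E2 E2'] /ler_normlP[A A'] /ler_normlP[B' B] /ler_normlP[Cb Cb'].
rewrite /MD /num.
have HL0' := HL0.
lra.
Qed.

Definition m0 := (1 - th1) / 2 * (smin / th1).
Definition cc := eta1 * m0 - 2 * kf * th2 ^+ 2.
Lemma cc_gt0 : 0 < cc.
Proof.
have := Hth1 => /andP[t0 t1]; have := Heta1 => /andP[e0 _].
have := Hsmin; rewrite ltr_pdivrMr; last by apply: mulr_gt0; lra.
move=> H.
have E : cc * (2 * th1) = smin * (eta1 * (1 - th1)) - 4 * kf * th1 * th2 ^+ 2.
  by rewrite /cc /m0; field; rewrite gt_eqF.
have : 0 < cc * (2 * th1) by rewrite E subr_gt0.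
by rewrite pmulr_lgt0 // mulr_gt0.
Qed.
Lemma m0_le k : m0 <= (1 - th1) / 2 * (sigma k / th1).
Proof.
have := Hth1 => /andP[t0 t1].
rewrite /m0; apply: ler_wpM2l; first by apply: divr_ge0; lra.
by rewrite ler_pM2r ?invr_gt0 // sigma_ge.
Qed.
Lemma MD_ge k : m0 * enorm (shat k) ^+ 2 <= MD k.
Proof.
apply: le_trans (C1 k); rewrite ler_wpM2r ?sqr_ge0 //; exact: m0_le.
Qed.
Lemma m0_gt0 : 0 < m0.
Proof.
have := Hth1 => /andP[t0 t1]; rewrite /m0 mulr_gt0 ?divr_gt0 ?subr_gt0 //.
exact: smin_gt0.
Qed.

Lemma succ k : eta1 <= rho k ->
  cc * enorm (shat k) ^+ 2 <= (f (x k) + Hx k) - (f (x k.+1) + Hx k.+1).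
Proof.
move=> hr.
have ex : x k.+1 = x k + s k by rewrite step_x hr.
have eH : Hx k.+1 = Hs k by rewrite /Hx /Hs ex.
rewrite ex eH.
have := Heta1 => /andP[e0 _].
have MD0 : 0 <= MD k.
  by apply: le_trans (MD_ge k); rewrite mulr_ge0 ?sqr_ge0 // ltW // m0_gt0.
have MDp : 0 < MD k.
  rewrite lt0r MD0 andbT; apply/eqP => M0.
  by move: hr; rewrite R4 -/(MD k) M0 invr0 mulr0 leNgt e0.
move: hr; rewrite R4 -/(MD k) -/(num k) ler_pdivlMr // => hr.
have [E1 [E2 _]] := HA6 k.
move: E1 E2 => /ler_normlP[E1 E1'] /ler_normlP[E2 E2'].
have e1 : eta1 * (m0 * enorm (shat k) ^+ 2) <= eta1 * MD k.
  by apply: ler_wpM2l; [exact: ltW|exact: MD_ge].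
have e2 : kf * enorm (s k) ^+ 2 <= kf * (th2 ^+ 2 * enorm (shat k) ^+ 2).
  by apply: ler_wpM2l; [exact: ltW|exact: nsq].
have i : cc * enorm (shat k) ^+ 2 =
  eta1 * (m0 * enorm (shat k) ^+ 2) - 2 * (kf * (th2 ^+ 2 * enorm (shat k) ^+ 2)).
  by rewrite /cc; ring.
move: hr; rewrite /num => hr.
lra.
Qed.

Definition CC := 2 * kf + L / 2 + kg + kB / 2 + kh.
Definition thr := Num.max smin (2 * th1 * CC * th2 ^+ 2 / ((1 - th1) * (1 - eta2))).
Lemma CC_ge0 : 0 <= CC.
Proof. have := Hkf; have := Hkg; have := HkB0; have := Hkh0; have := HL0; rewrite /CC; lra. Qed.

Lemma vsucc k : thr <= sigma k -> shat k != 0 -> eta2 <= rho k.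
Proof.
move=> hs hn.
have := Hth1 => /andP[t0 t1]; have := Heta2 => e2.
rewrite R4 -/(MD k).
apply: (@core3 _ _ _ (enorm (s k) ^+ 2) (enorm (shat k) ^+ 2)
        ((1 - th1) / 2 * (sigma k / th1)) CC (th2 ^+ 2)).
- rewrite exprn_gt0 // lt0r enorm_ge0 andbT; apply/eqP => /enorm_eq0.
  by apply/eqP.
- exact: nsq.
- exact: C1.
- by rewrite /num; have := err k.
- exact: CC_ge0.
- move: hs; rewrite ge_max => /andP[_].
  rewrite ler_pdivrMr; last by apply: mulr_gt0; lra.
  move=> H.
  have E : (1 - eta2) * ((1 - th1) / 2 * (sigma k / th1)) - CC * th2 ^+ 2 =
     (sigma k * ((1 - th1) * (1 - eta2)) - 2 * th1 * CC * th2 ^+ 2) / (2 * th1).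
    by field; rewrite gt_eqF.
  rewrite -subr_ge0 E divr_ge0 // ?subr_ge0 //; lra.
- apply: mulr_gt0; first by apply: divr_gt0; lra.
  by apply: divr_gt0 => //; apply: lt_le_trans (sigma_ge k); exact: smin_gt0.
- exact: e2.
Qed.

Definition F k := f (x k) + Hx k.
Lemma cc_nsh_ge0 k : 0 <= cc * enorm (shat k) ^+ 2.
Proof. by rewrite mulr_ge0 ?sqr_ge0 // ltW // cc_gt0. Qed.
Lemma F_dec k : F k.+1 <= F k.
Proof.
case: (lerP eta1 (rho k)) => hr.
  have := succ k hr; have := cc_nsh_ge0 k; rewrite /F; lra.
have e : (eta1 <= rho k) = false by rewrite leNgt hr.
by rewrite /F /Hx step_x e.
Qed.
Lemma F_mono i j : (i <= j)%N -> F j <= F i.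
Proof.
move=> /subnK <-; elim: (j - i)%N => [|d IH]; first by rewrite add0n.
by rewrite addSn; apply: le_trans (F_dec _) IH.
Qed.
Lemma F_low k : low <= F k.
Proof. by have := Hlow (x k); rewrite EHx -EFinD lee_fin. Qed.

Lemma sig_up k : sigma k.+1 <= Num.max (gam2 * sigma k) smin.
Proof.
have := Hgam1 => /andP[g1 g2].
have sp : 0 < sigma k := lt_le_trans smin_gt0 (sigma_ge k).
have [sig' [H1 [H2 [H3 ->]]]] := step_sig k.
rewrite ge_max; apply/andP; split; last by rewrite le_max lexx orbT.
rewrite le_max; apply/orP; left.
case: (lerP eta2 (rho k)) => h2.
  have /andP[_ e] := H1 h2; apply: le_trans e _; rewrite ler_peMl ?ltW //; lra.
case: (lerP eta1 (rho k)) => h1.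
  have /andP[_ e] := H2 (introT andP (conj h1 h2)); apply: le_trans e _.
  by rewrite ler_pM2r.
by have /andP[_ e] := H3 h1.
Qed.
Lemma sig_vs k : eta2 <= rho k -> sigma k.+1 <= sigma k.
Proof.
move=> h2; have [sig' [H1 [_ [_ ->]]]] := step_sig k.
by have /andP[_ e] := H1 h2; rewrite ge_max e sigma_ge.
Qed.
Lemma sig_uns k : rho k < eta1 -> gam1 * sigma k <= sigma k.+1.
Proof.
move=> h1; have [sig' [_ [_ [H3 ->]]]] := step_sig k.
by have /andP[e _] := H3 h1; rewrite le_max e.
Qed.

Lemma thr_ge : smin <= thr.
Proof. by rewrite le_max lexx. Qed.

Lemma sig_bd K0 : (forall k, (K0 <= k)%N -> shat k != 0) ->
  forall j, sigma (K0 + j) <= Num.max (sigma K0) (gam2 * thr).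
Proof.
move=> Hn; have := Hgam1 => /andP[g1 g2].
have thr0 : 0 < thr := lt_le_trans smin_gt0 thr_ge.
elim=> [|j IH]; first by rewrite addn0 le_max lexx.
rewrite addnS; case: (lerP thr (sigma (K0 + j))) => ht.
  apply: (le_trans _ IH); apply: sig_vs; apply: vsucc ht _; apply: Hn; exact: leq_addr.
apply: le_trans (sig_up _) _; rewrite ge_max; apply/andP; split.
  rewrite le_max; apply/orP; right; rewrite ler_pM2l ?ltW //; lra.
rewrite le_max; apply/orP; right; apply: le_trans thr_ge _.
rewrite ler_peMl ?ltW //; lra.
Qed.

Lemma succ_inf K0 : (forall k, (K0 <= k)%N -> shat k != 0) ->
  forall M, exists k, [/\ (M <= k)%N, (K0 <= k)%N & eta1 <= rho k].
Proof.
move=> Hn M; have [//|nH] := pselect (exists k, [/\ (M <= k)%N, (K0 <= k)%N & eta1 <= rho k]).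
exfalso; set M' := maxn M K0.
have uns : forall j, rho (M' + j) < eta1.
  move=> j; rewrite ltNge; apply/negP => hh; apply: nH; exists (M' + j); split => //.
  - by apply: leq_trans (leq_addr _ _); rewrite leq_maxl.
  - by apply: leq_trans (leq_addr _ _); rewrite leq_maxr.
have := Hgam1 => /andP[g1 g2].
have grow : forall j, gam1 ^+ j * smin <= sigma (M' + j).
  elim=> [|j IH]; first by rewrite addn0 expr0 mul1r sigma_ge.
  rewrite addnS; apply: (le_trans _ (sig_uns _ (uns j))); rewrite exprS -mulrA.
  by rewrite ler_pM2l // (lt_trans ltr01 g1).
set S := Num.max (sigma K0) (gam2 * thr).
have [j hj] := @geo_unbounded _ gam1 (S / smin) g1.
have := grow j; have hK : (M' + j = K0 + (M' + j - K0))%N.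
  by rewrite subnKC // (leq_trans (leq_maxr M K0)) // leq_addr.
rewrite hK => hh; have := le_trans hh (sig_bd _ Hn _).
rewrite -ler_pdivlMr ?smin_gt0 // => h'.
by have := lt_le_trans hj h'; rewrite ltxx.
Qed.

Lemma shat_cvg (N : set nat) : (forall k, N k -> eta1 <= rho k) -> cvg0_along N shat.
Proof.
move=> HN eps e0.
have [//|nH] := pselect (exists K, forall k, N k -> (K <= k)%N -> enorm (shat k) < eps).
exfalso.
have bad : forall K, exists k, [/\ N k, (K <= k)%N & eps <= enorm (shat k)].
  move=> K; apply: contrapT => H; apply: nH; exists K => k Nk Kk.
  by rewrite ltNge; apply/negP => hh; apply: H; exists k; split.
have c0 := cc_gt0.
have ce : 0 < cc * eps ^+ 2 by rewrite mulr_gt0 // exprn_gt0.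
have dec : forall j, exists M, F M <= F 0 - j%:R * (cc * eps ^+ 2).
  elim=> [|j [M HM]]; first by exists 0%N; rewrite mul0r subr0.
  have [k [Nk Mk ek]] := bad M.
  exists k.+1; have := succ k (HN _ Nk).
  have : cc * eps ^+ 2 <= cc * enorm (shat k) ^+ 2.
    by rewrite ler_pM2l // ler_pXn2r ?nnegrE ?enorm_ge0 // ltW.
  have := F_mono _ _ Mk; move: HM; rewrite -natr1 /F => *; lra.
have [j hj] := archi ((F 0 - low) / (cc * eps ^+ 2)).
have [M HM] := dec j; have := F_low M.
move: hj; rewrite ltr_pdivrMr // => hj; lra.
Qed.

Lemma subgrad k (scp : vec) : argmin (m_cp psi (x k) (fh0 k) (gh k) (a k)) scp ->
  limiting_subdiff (psi^~ (x k)) scp (- gh k - a k *: scp).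
Proof.
move=> Hmin.
have fin : psi scp (x k) \is a fin_num.
  have m1 : m_cp psi (x k) (fh0 k) (gh k) (a k) (shat k) \is a fin_num.
    by rewrite /m_cp fin_numD EPsh andbT.
  by move: (Hmin (shat k)); rewrite {1}/m_cp => /fin_le; apply.
set P := fine (psi scp (x k)).
have EP : psi scp (x k) = P%:E by rewrite /P fineK.
have ap := a_gt0 k.
have fr : frechet_subdiff (psi^~ (x k)) scp (- gh k - a k *: scp).
  split => // eps e0; exists (eps / a k); first by rewrite divr_gt0.
  move=> y hy /=; rewrite -/P.
  have := Hmin y; rewrite /m_cp /phi_cp EP.
  case E: (psi y (x k)) => [r| |]; last 2 first.
  - by move=> _; rewrite leey.
  - by have := Hpsi_noo (x k) y; rewrite E.
  rewrite -EFinD lee_fin => H.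
  rewrite lee_fin.
  set w := y - scp in hy *.
  have ey : y = scp + w by rewrite /w addrC subrK.
  clearbody w; subst y.
  move: H; rewrite dotpDr !enormE dotpDl !dotpDr (dotpC w scp) => H.
  rewrite dotpBl dotpNl dotpZl.
  have hw : a k * enorm w <= eps by rewrite mulrC -ler_pdivlMr // ltW.
  have hw2 : a k * enorm w * enorm w <= eps * enorm w by rewrite ler_wpM2r ?enorm_ge0.
  have ew : dotp w w = enorm w * enorm w by rewrite -enormE expr2.
  have ew0 : 0 <= dotp w w by exact: dotpp_ge0.
  have ha : a k / 2 * dotp w w <= a k * dotp w w.
    by rewrite ler_wpM2r // ler_pdivrMr // ler_peMr ?ltW //; lra.
  have ew2 : a k * dotp w w = a k * enorm w * enorm w by rewrite ew mulrA.
  lra.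
split => //; exists (fun=> scp), (fun=> - gh k - a k *: scp); split => //.
split; first by move=> e e0; exists 0%N => j _; rewrite subrr enorm0.
split; first by move=> e e0; exists 0%N => j _; rewrite subrr normr0.
by move=> e e0; exists 0%N => j _; rewrite subrr enorm0.
Qed.

Lemma cvg_from (N : set nat) (z : nat -> vec) (M : R) : 0 <= M ->
  (forall k, N k -> enorm (z k) <= M * enorm (shat k) + (k.+1%:R)^-1) ->
  cvg0_along N shat -> cvg0_along N z.
Proof.
move=> M0 Hz Hc eps e0.
have d0 : 0 < eps / (2 * (M + 1)) by rewrite divr_gt0 // mulr_gt0 //; lra.
have [K1 H1] := Hc _ d0.
have [j hj] := archi (2 / eps).
exists (maxn K1 j) => k Nk Kk.
have k1 : (K1 <= k)%N := leq_trans (leq_maxl _ _) Kk.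
have jk : (j <= k)%N := leq_trans (leq_maxr _ _) Kk.
have h1 := H1 k Nk k1.
have h2 : M * enorm (shat k) <= M * (eps / (2 * (M + 1))) by rewrite ler_wpM2l // ltW.
have h3 : M * (eps / (2 * (M + 1))) <= eps / 2.
  have E : eps / 2 - M * (eps / (2 * (M + 1))) = eps / (2 * (M + 1)).
    by field; rewrite gt_eqF //; lra.
  lra.
have h4 : (k.+1%:R)^-1 < eps / 2 :> R.
  rewrite -div1r ltr_pdivrMr ?ltr0Sn //.
  have : 2 / eps < k.+1%:R.
    apply: lt_le_trans hj _; rewrite ler_nat; exact: leq_trans jk (leqnSn _).
  rewrite ltr_pdivrMr // => hh.
  have -> : eps / 2 * k.+1%:R = (k.+1%:R * eps) / 2 by rewrite mulrC mulrA.
  by rewrite ltr_pdivlMr //; lra.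
have := Hz k Nk. move: h1 h2 h3 h4. set q := k.+1%:R^-1. set d := eps / (2 * (M + 1)). lra.
Qed.

Lemma inv_le k : ((k.+1%:R) * (a k + 1))^-1 <= (k.+1%:R)^-1 :> R.
Proof.
have ap := a_gt0 k.
rewrite lef_pV2 ?posrE ?mulr_gt0 ?ltr0Sn //; last by lra.
by rewrite ler_peMr ?ler0n //; lra.
Qed.
Lemma a_inv k : a k * ((k.+1%:R) * (a k + 1))^-1 <= (k.+1%:R)^-1 :> R.
Proof.
have ap := a_gt0 k.
have E : (k.+1%:R)^-1 - a k * ((k.+1%:R) * (a k + 1))^-1 = (k.+1%:R)^-1 / (a k + 1) :> R.
  by field; rewrite !gt_eqF // ?ltr_pwDl //; lra.
have : 0 <= (k.+1%:R)^-1 / (a k + 1) :> R.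
  by rewrite divr_ge0 ?invr_ge0 ?ler0n //; lra.
rewrite -E subr_ge0 //.
Qed.

Lemma hsc k : exists t, argmin (m_cp psi (x k) (fh0 k) (gh k) (a k)) t /\ enorm t <= enorm (shat k) / ks + ((k.+1%:R) * (a k + 1))^-1.
Proof.
have [ne hi] := HA5 k.
set A := argmin _ in ne hi.
have ap := a_gt0 k.
have ep : 0 < ((k.+1%:R) * (a k + 1))^-1 :> R.
  by rewrite invr_gt0 mulr_gt0 ?ltr0Sn //; lra.
have hinf : has_inf [set enorm t | t in A].
  split; first by case: ne => t At; exists (enorm t), t.
  by exists 0 => _ [t _ <-]; exact: enorm_ge0.
have [_ [t At <-] ht] := inf_adherent ep hinf.
exists t; split => //.
have := Hks => /andP[k0 k1].
have : inf [set enorm t | t in A] <= enorm (shat k) / ks by rewrite ler_pdivlMr // mulrC.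
move: ht; set I := inf _; set e := (_ ^-1); set q := enorm (shat k) / ks; lra.
Qed.

Lemma final : exists N : set nat, infinite_set N /\
  exists scp u : nat -> vec,
    (forall k, N k ->
       scp k \in argmin (m_cp psi (x k) (fh0 k) (gh k)
                          (th1 / (opnorm (Bfun (x k)) + sigma k))^-1)) /\
    cvg0_along N shat /\ cvg0_along N scp /\
    cvg0_along N s /\
    (forall k, N k -> exists v, limiting_subdiff (psi^~ (x k)) (scp k) v /\
                               u k = g (x k) + v) /\
    cvg0_along N u.
Proof.
have [scp Hscp] := choice hsc.
set u := fun k => g (x k) + (- gh k - a k *: scp k).
have := Hks => /andP[ks0 ks1].
have := Hth2 => th2p.
have kg0 := Hkg.
have invp : forall k : nat, 0 < (k.+1%:R)^-1 :> R by move=> k; rewrite invr_gt0 ltr0Sn.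
have bs : forall k, enorm (s k) <= th2 * enorm (shat k) + (k.+1%:R)^-1.
  by move=> k; have := C0 k; have := invp k; set e := (_%:R)^-1; lra.
have bscp : forall k, enorm (scp k) <= ks^-1 * enorm (shat k) + (k.+1%:R)^-1.
  move=> k; have [_ h1] := Hscp k; have := inv_le k.
  move: h1; rewrite mulrC; set e1 := (_ * _)^-1; set e2 := (_%:R)^-1; lra.
have bu : forall k, enorm (u k) <= kg * th2 * enorm (shat k) + a k * (ks^-1 * enorm (shat k)) + (k.+1%:R)^-1.
  move=> k; rewrite /u addrA.
  apply: le_trans (enormB _ _) _.
  have [_ [_ e3]] := HA6 k.
  have e4 : kg * enorm (s k) <= kg * (th2 * enorm (shat k)) by apply: ler_wpM2l; [exact: ltW | exact: C0].
  rewrite enormZ gtr0_norm ?a_gt0 //.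
  have [_ h1] := Hscp k.
  have e5 : a k * enorm (scp k) <= a k * (enorm (shat k) / ks + ((k.+1%:R) * (a k + 1))^-1).
    by rewrite ler_wpM2l // ltW // a_gt0.
  have := a_inv k.
  move: e3 e4 e5.
  set e1 := ((k.+1%:R) * (a k + 1))^-1; set e2 := (k.+1%:R)^-1; set ki := ks^-1.
  have -> : enorm (shat k) / ks = ki * enorm (shat k) by rewrite mulrC.
  rewrite mulrDr !mulrA; lra.
have cvgs : forall N, cvg0_along N shat -> cvg0_along N s /\ cvg0_along N scp.
  move=> N hN; split.
    by apply: (cvg_from N s th2 _ (fun k _ => bs k) hN); lra.
  by apply: (cvg_from N scp ks^-1 _ (fun k _ => bscp k) hN); rewrite invr_ge0 ltW.
have sub : forall N : set nat, forall k, N k -> exists v, limiting_subdiff (psi^~ (x k)) (scp k) v /\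
                               u k = g (x k) + v.
  move=> N k _; exists (- gh k - a k *: scp k); split => //.
  by apply: subgrad; have [] := Hscp k.
have arg : forall N : set nat, forall k, N k ->
       scp k \in argmin (m_cp psi (x k) (fh0 k) (gh k)
                          (th1 / (opnorm (Bfun (x k)) + sigma k))^-1).
  by move=> N k _; rewrite in_setE; have [] := Hscp k.
have [[K0 HK0]|nK] := pselect (exists K0, forall k, (K0 <= k)%N -> shat k != 0).
  set N := [set k | (K0 <= k)%N /\ eta1 <= rho k].
  exists N; split.
    apply: infinite_of => K; have [k [h1 h2 h3]] := succ_inf K0 HK0 K.
    by exists k; split.
  have cN : cvg0_along N shat by apply: shat_cvg => k [].
  have [c1 c2] := cvgs N cN.
  exists scp, u; do 5?split => //; [exact: arg|exact: sub|].
  set S := Num.max (sigma K0) (gam2 * thr).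
  have aB : forall k, N k -> a k <= (kB + S) / th1.
    move=> k [hk _]; rewrite aE ler_pM2r ?invr_gt0; last by case/andP: Hth1.
    have e1 := HkB k.
    have : sigma k <= S by rewrite -(subnKC hk); exact: sig_bd.
    lra.
  have S0 : 0 <= (kB + S) / th1.
    apply: divr_ge0; last by case/andP: Hth1 => *; exact: ltW.
    apply: addr_ge0; first exact: ltW.
    by rewrite le_max (le_trans (ltW smin_gt0) (sigma_ge K0)).
  apply: (cvg_from N u (kg * th2 + (kB + S) / th1 * ks^-1)) => //.
    apply: addr_ge0; first by apply: mulr_ge0; lra.
    by apply: mulr_ge0 => //; rewrite invr_ge0 ltW.
  move=> k Nk; apply: le_trans (bu k) _.
  have : a k * (ks^-1 * enorm (shat k)) <= (kB + S) / th1 * (ks^-1 * enorm (shat k)).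
    apply: ler_wpM2r; last exact: aB.
    by apply: mulr_ge0; [rewrite invr_ge0 ltW | exact: enorm_ge0].
  rewrite !mulrDl !mulrA; set e2 := (k.+1%:R)^-1; set Q := (kB + S) / th1; set ki := ks^-1; lra.
set N := [set k | shat k = 0].
exists N; split.
  apply: infinite_of => K.
  apply: contrapT => H; apply: nK; exists K => k hk; apply/eqP => e.
  by apply: H; exists k.
have cN : cvg0_along N shat by move=> e e0; exists 0%N => k -> _; rewrite enorm0.
have [c1 c2] := cvgs N cN.
exists scp, u; do 5?split => //; [exact: arg|exact: sub|].
apply: (cvg_from N u 0) => // k Nk; apply: le_trans (bu k) _.
by rewrite Nk enorm0 !mulr0 !add0r.
Qed.
End Main.

Theorem lemma3p9 (R : realType) (n : nat)
  (f : 'cV[R]_n -> R) (g : 'cV[R]_n -> 'cV[R]_n)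
  (h : 'cV[R]_n -> \bar R) (psi : 'cV[R]_n -> 'cV[R]_n -> \bar R)
  (Bfun : 'cV[R]_n -> 'M[R]_n)
  (kf kg gam3 gam1 gam2 eta1 eta2 th1 th2 smin : R)
  (x : nat -> 'cV[R]_n) (sigma : nat -> R) (fh0 fh1 : nat -> R)
  (gh : nat -> 'cV[R]_n) (shat s : nat -> 'cV[R]_n) :
  (* standing assumptions *)
  C1_gradient f g ->
  proper_fun h -> lsc_fun h ->
  (forall y, proper_fun (psi^~ y) /\ lsc_fun (psi^~ y)) ->
  (forall y, psi 0 y = h y) ->
  (forall y v, limiting_subdiff (psi^~ y) 0 v -> limiting_subdiff h y v) ->
  (exists2 lam : R, 0 < lam & forall y lam', 0 < lam' < lam ->
     exists c : R, forall w, (c%:E <= psi w y + (enorm w ^+ 2 / (2 * lam'))%:E)%E) ->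
  (forall y, (Bfun y)^T = Bfun y) ->
  (* constants *)
  0 < kf -> 0 < kg -> 0 < gam3 <= 1 -> 1 < gam1 <= gam2 ->
  0 < eta1 <= eta2 -> eta2 < 1 -> 0 < th1 < 1 -> 1 < th2 ->
  4 * kf * th1 * th2 ^+ 2 / (eta1 * (1 - th1)) < smin ->
  (* the starting point lies in dom h (needed for rho_k to be defined) *)
  h (x 0%N) \is a fin_num ->
  (* the run of the algorithm *)
  iR2N_run h psi Bfun gam3 gam1 gam2 eta1 eta2 th1 th2 smin x sigma fh0 fh1 gh shat s ->
  (* (A1) *)
  (exists2 L : R, 0 <= L & forall y t,
     `|f (y + t) - f y - dotp (g y) t| <= L / 2 * enorm t ^+ 2) ->
  (* (A2) *)
  (exists2 kB : R, 0 < kB & forall k, opnorm (Bfun (x k)) <= kB) ->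
  (* (A3) *)
  (exists2 kh : R, 0 < kh & forall y t,
     (psi t y <= h (y + t)%R + (kh * enorm t ^+ 2)%:E)%E /\
     (h (y + t)%R <= psi t y + (kh * enorm t ^+ 2)%:E)%E) ->
  (* (A4) *)
  (forall k, ((1 - th1)%:E * xi_cp psi (x k) (fh0 k) (gh k) (shat k)
      <= model_decrease psi (x k) (fh0 k) (gh k) (Bfun (x k)) (s k))%E) ->
  (* (A5) *)
  (exists2 ks : R, 0 < ks <= 1 & forall k,
     let nuk := th1 / (opnorm (Bfun (x k)) + sigma k) in
     let A := argmin (m_cp psi (x k) (fh0 k) (gh k) nuk^-1) in
     A !=set0 /\ ks * inf [set enorm t | t in A] <= enorm (shat k)) ->
  (* (A6) *)
  (forall k,
     `|f (x k) - fh0 k| <= kf * enorm (s k) ^+ 2 /\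
     `|f (x k + s k) - fh1 k| <= kf * enorm (s k) ^+ 2 /\
     enorm (g (x k) - gh k) <= kg * enorm (s k)) ->
  (* (A7) *)
  (exists low : R, forall y, (low%:E <= (f y)%:E + h y)%E) ->
  exists N : set nat, infinite_set N /\
  exists scp u : nat -> 'cV[R]_n,
    (forall k, N k ->
       scp k \in argmin (m_cp psi (x k) (fh0 k) (gh k)
                          (th1 / (opnorm (Bfun (x k)) + sigma k))^-1)) /\
    cvg0_along N shat /\ cvg0_along N scp /\
    cvg0_along N s /\
    (forall k, N k -> exists v, limiting_subdiff (psi^~ (x k)) (scp k) v /\
                               u k = g (x k) + v) /\
    cvg0_along N u.
Proof.
move=> [_ Hg] [Hhn _] _ Hpsi Hpsi0 _ _ _ Hkf Hkg Hgam3 Hgam1 Heta1 Heta2 Hth1 Hth2 Hsmin Hx0 Hrun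
  [L HL0 HL] [kB HkB0 HkB] [kh Hkh0 Hkh] HA4 [ks Hks HA5] HA6 [low Hlow].
exact (final _ _ _ _ _ _ _ _ _ _ _ _ _ _ _ _ _ _ _ _ _ _ _ _ _ _ _ _ _ (fun y => Hhn y) (fun y w => (Hpsi y).1.1 w) Hpsi0 Hkf Hkg Hgam1 Heta1 Heta2
  Hth1 Hth2 Hsmin Hx0 Hrun HL0 HL HkB0 HkB Hkh0 Hkh HA4 Hks HA5 HA6 Hlow).
Qed.
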